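(* Consider the iterates of the Byzantine-resilient algorithm in the context, and let $\Lambda^{k}\in\mathbb R^{H\times D}$ and $\Lambda^{k+1/2}\in\mathbb R^{H\times D}$ be the matrices whose $i$-th rows are $(\lambda_i^k)^\top$ and $(\lambda_i^{k+1/2})^\top$, $i\in\mathcal H$. Then for every $k\ge0$ and every $v\in(0,1)$, $$\Big\|\Lambda^{k+\frac12}-\tfrac1H\mathbf 1\mathbf 1^\top\Lambda^{k+\frac12}\Big\|_F^2\le\Big(\frac{1}{1-v}+\frac{6(\gamma^k)^2}{v\,u_f^2J^2}\Big)\Big\|\Lambda^{k}-\tfrac1H\mathbf 1\mathbf 1^\top\Lambda^{k}\Big\|_F^2+\frac{3(\gamma^k)^2\delta^2H^3}{vJ^2}.$$ In particular, if $\gamma^k\le\frac{u_fJ}{2\sqrt3}$, then $$\Big\|\Lambda^{k+\frac12}-\tfrac1H\mathbf 1\mathbf 1^\top\Lambda^{k+\frac12}\Big\|_F^2\le3\Big\|\Lambda^{k}-\tfrac1H\mathbf 1\mathbf 1^\top\Lambda^{k}\Big\|_F^2+\frac{6(\gamma^k)^2\delta^2H^3}{J^2}.$$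
   Context: Byzantine setting: $J$ agents, of which $\mathcal H=\{1,\dots,H\}$ are honest. For each $i\in\mathcal H$, $f_i:\mathbb R^D\to\mathbb R$ is $u_f$-strongly convex and $L_f$-smooth, $C_i\subset\mathbb R^D$ nonempty compact convex, $s\in\mathbb R^D$. Define $g_i(\lambda)=\frac1H\max_{\theta\in C_i}\{-\lambda^\top\theta-f_i(\theta)\}+\frac1H\lambda^\top s$, so $\nabla g_i(\lambda)=\frac1H s-\frac1H\arg\min_{\theta\in C_i}\{\lambda^\top\theta+f_i(\theta)\}$, and $\delta^2:=\sup_{\lambda\in\mathbb R^D}\max_{i\in\mathcal H}\|\nabla g_i(\lambda)-\frac1H\sum_{j\in\mathcal H}\nabla g_j(\lambda)\|^2<\infty$. The honest agents run: $\theta_i^k=\arg\min_{\theta\in C_i}\{\theta^\top\lambda_i^k+f_i(\theta)\}$, $\lambda_i^{k+1/2}=\lambda_i^k-\gamma^k(\frac1J s-\frac1J\theta_i^k)$ (and then $\lambda_i^{k+1}$ is produced by some aggregation rule), with step sizes $\gamma^k>0$. $\mathbf 1\in\mathbb R^H$ is the all-ones vector and $\|\cdot\|_F$ the Frobenius norm. *)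

(* Defs.v *)
From HB Require Import structures.
From mathcomp Require Import all_boot all_order all_algebra.
From mathcomp Require Import all_classical all_reals all_analysis.
Set Implicit Arguments. Unset Strict Implicit. Unset Printing Implicit Defensive.
Import Order.TTheory GRing.Theory Num.Theory.
Import numFieldNormedType.Exports.
Local Open Scope classical_set_scope.
Local Open Scope ring_scope.

Section Defs.
Variable R : realType.

Definition dotv (D : nat) (u v : 'rV[R]_D) : R := \sum_(j < D) u 0 j * v 0 j.
Definition sqnorm (D : nat) (u : 'rV[R]_D) : R := dotv u u.
Definition enorm (D : nat) (u : 'rV[R]_D) : R := Num.sqrt (sqnorm u).

Definition frob2 (m n : nat) (A : 'M[R]_(m, n)) : R := \sum_(i < m) \sum_(j < n) A i j ^+ 2.

Definition dev (H D : nat) (A : 'M[R]_(H, D)) : 'M[R]_(H, D) :=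
  A - (H%:R)^-1 *: (const_mx 1 *m A).

Definition gradv (D : nat) (f : 'rV[R]_D -> R) (x : 'rV[R]_D) : 'rV[R]_D :=
  \row_j ('d f x (delta_mx 0 j)).

Definition strongly_convex (D : nat) (u : R) (f : 'rV[R]_D -> R) : Prop :=
  forall (x y : 'rV[R]_D) (t : R), 0 <= t -> t <= 1 ->
    f (t *: x + (1 - t) *: y) <=
      t * f x + (1 - t) * f y - u / 2 * t * (1 - t) * sqnorm (x - y).

Definition smooth_L (D : nat) (L : R) (f : 'rV[R]_D -> R) : Prop :=
  (forall x, differentiable f x) /\
  forall x y, enorm (gradv f x - gradv f y) <= L * enorm (x - y).

Definition cvx_set (D : nat) (C : set 'rV[R]_D) : Prop :=
  forall x y (t : R), C x -> C y -> 0 <= t -> t <= 1 -> C (t *: x + (1 - t) *: y).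

Definition is_argmin (D : nat) (C : set 'rV[R]_D) (f : 'rV[R]_D -> R)
  (lam th : 'rV[R]_D) : Prop :=
  C th /\ forall th', C th' -> dotv lam th + f th <= dotv lam th' + f th'.

End Defs.

(* Main.v *)
Require Import Defs.
From HB Require Import structures.
From mathcomp Require Import all_boot all_order all_algebra.
From mathcomp Require Import all_classical all_reals all_analysis.
From mathcomp Require Import ring lra.
Import Order.TTheory GRing.Theory Num.Theory.
Import numFieldNormedType.Exports.
Local Open Scope classical_set_scope.
Local Open Scope ring_scope.
Set Implicit Arguments. Unset Strict Implicit.
Lemma young (R : realFieldType) (x y v : R) : 0 < v -> v < 1 ->
  (x + y) ^+ 2 <= (1 - v)^-1 * x ^+ 2 + v^-1 * y ^+ 2.
Proof.
move=> v0 v1.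
have h1 : 1 - v != 0 by rewrite subr_eq0 eq_sym lt_eqF.
have h0 : v != 0 by rewrite gt_eqF.
have key : (1 - v)^-1 * x ^+ 2 + v^-1 * y ^+ 2 - (x + y) ^+ 2 =
   (v * x - (1 - v) * y) ^+ 2 / (v * (1 - v)) by field; rewrite h1 h0.
rewrite -subr_ge0 key divr_ge0 ?sqr_ge0 // mulr_ge0 //; lra.
Qed.

Lemma var_le (R : realFieldType) (n : nat) (x : 'I_n -> R) (c : R) :
  \sum_i (x i - n%:R^-1 * \sum_l x l) ^+ 2 <= \sum_i (x i - c) ^+ 2.
Proof.
set m := n%:R^-1 * \sum_l x l.
have hS : \sum_l x l = n%:R * m.
  rewrite /m; case: n x {m} => [|n] x; first by rewrite big_ord0 mul0r.
  by rewrite mulrA mulfV ?mul1r // pnatr_eq0.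
rewrite -subr_ge0 -sumrB.
have -> : \sum_i ((x i - c) ^+ 2 - (x i - m) ^+ 2) =
   \sum_i ((m - c) * (2 * x i - (m + c))) by apply: eq_bigr => i _; ring.
rewrite -mulr_sumr sumrB -mulr_sumr sumr_const card_ord hS -mulr_natr.
match goal with |- is_true (0 <= ?X) => have -> : X = n%:R * (m - c) ^+ 2 by ring end.
by rewrite mulr_ge0 ?sqr_ge0.
Qed.

Lemma amgm (R : realFieldType) (x y c : R) : 0 < c -> x * y <= x ^+ 2 / (4 * c) + c * y ^+ 2.
Proof.
move=> c0; have h : c != 0 by rewrite gt_eqF.
have key : x ^+ 2 / (4 * c) + c * y ^+ 2 - x * y = (x - 2 * c * y) ^+ 2 / (4 * c) by field.
rewrite -subr_ge0 key divr_ge0 ?sqr_ge0 //; lra.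
Qed.

Lemma dotv_lin (R : realType) D (l x y : 'rV[R]_D) (p q : R) :
  dotv l (p *: x + q *: y) = p * dotv l x + q * dotv l y.
Proof.
rewrite /dotv !mulr_sumr -big_split /=; apply: eq_bigr => j _; rewrite !mxE /=; ring.
Qed.

Lemma sqnormE (R : realType) D (x y : 'rV[R]_D) :
  sqnorm (x - y) = \sum_j (x 0 j - y 0 j) ^+ 2.
Proof. by rewrite /sqnorm /dotv; apply: eq_bigr => j _; rewrite !mxE expr2. Qed.

Lemma argmin_quad (R : realType) D (u : R) f (C : set 'rV[R]_D) lam a y :
  0 < u -> strongly_convex u f -> cvx_set C -> is_argmin C f lam a -> C y ->
  dotv lam a + f a + 3 * u / 8 * sqnorm (y - a) <= dotv lam y + f y.
Proof.
move=> u0 sc cv [Ca Hm] Cy.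
have Cz := cv y a (1/4) Cy Ca ltac:(lra) ltac:(lra).
have h1 := Hm _ Cz.
have h2 := sc y a (1/4) ltac:(lra) ltac:(lra).
rewrite dotv_lin in h1.
lra.
Qed.

Lemma argmin_lip (R : realType) D (u : R) f (C : set 'rV[R]_D) (th : 'rV[R]_D -> 'rV[R]_D) :
  0 < u -> strongly_convex u f -> cvx_set C -> (forall lam, is_argmin C f lam (th lam)) ->
  forall l1 l2, sqnorm (th l1 - th l2) <= 16 / (9 * u ^+ 2) * sqnorm (l1 - l2).
Proof.
move=> u0 sc cv am l1 l2.
have h1 := argmin_quad u0 sc cv (am l1) (am l2).1.
have h2 := argmin_quad u0 sc cv (am l2) (am l1).1.
set a := th l1 in h1 h2 *; set b := th l2 in h1 h2 *.
have ea : sqnorm (b - a) = sqnorm (a - b).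
  rewrite !sqnormE; apply: eq_bigr => j _; ring.
have ep : dotv l1 b - dotv l1 a + dotv l2 a - dotv l2 b =
   \sum_j (l1 0 j - l2 0 j) * (b 0 j - a 0 j).
  rewrite /dotv -!sumrB -big_split -sumrB /=; apply: eq_bigr => j _; ring.
have c0 : 0 < 3 * u / 8 by lra.
have hp : \sum_j (l1 0 j - l2 0 j) * (b 0 j - a 0 j) <=
   \sum_j ((l1 0 j - l2 0 j) ^+ 2 / (4 * (3 * u / 8)) + 3 * u / 8 * (b 0 j - a 0 j) ^+ 2).
  by apply: ler_sum => j _; apply: amgm.
rewrite big_split /= -mulr_suml -mulr_sumr in hp.
have ebs : \sum_j (b 0 j - a 0 j) ^+ 2 = sqnorm (a - b).
  rewrite sqnormE; apply: eq_bigr => j _; ring.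
rewrite ebs -sqnormE in hp.
set X := sqnorm (l1 - l2) in hp *; set Y := sqnorm (a - b) in hp ea h2 *.
have X0 : 0 <= X by rewrite /X /sqnorm /dotv sumr_ge0 // => j _; rewrite -expr2 sqr_ge0.
rewrite ea in h1.
set P := \sum_(j < D) _ in hp ep. set Q := X / _ in hp *. have hY : 3 * u / 8 * Y <= Q by lra. rewrite /Q in hY.
have -> : 16 / (9 * u ^+ 2) * X = 8 / (3 * u) * (X / (4 * (3 * u / 8))).
  by field; rewrite gt_eqF.
have -> : Y = 8 / (3 * u) * (3 * u / 8 * Y) by field; rewrite gt_eqF.
apply: ler_wpM2l => //; rewrite divr_ge0 //; lra.
Qed.

Lemma frob_split (R : realType) H D (dA dB e : 'I_H -> 'I_D -> R) (g v : R) :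
  0 < v -> v < 1 -> (forall i j, dB i j = dA i j + g * e i j) ->
  \sum_i \sum_j dB i j ^+ 2 <=
  (1 - v)^-1 * (\sum_i \sum_j dA i j ^+ 2) + v^-1 * g ^+ 2 * (\sum_i \sum_j e i j ^+ 2).
Proof.
move=> v0 v1 hd; rewrite !mulr_sumr -big_split /=; apply: ler_sum => i _.
rewrite !mulr_sumr -big_split /=; apply: ler_sum => j _.
rewrite hd; apply: le_trans (young _ _ v0 v1) _.
rewrite exprMn; lra.
Qed.

Lemma col_var (R : realType) H D (T P : 'I_H -> 'I_D -> R) :
  \sum_i \sum_j (T i j - H%:R^-1 * \sum_l T l j) ^+ 2 <=
  2 * (\sum_i \sum_j (T i j - P i j) ^+ 2) +
  2 * (\sum_i \sum_j (P i j - H%:R^-1 * \sum_l P l j) ^+ 2).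
Proof.
have e2 : forall (F G : 'I_H -> 'I_D -> R),
    \sum_i \sum_j (2 * F i j + 2 * G i j) =
    2 * (\sum_i \sum_j F i j) + 2 * (\sum_i \sum_j G i j).
  move=> F G; rewrite !mulr_sumr -big_split /=; apply: eq_bigr => i _.
  by rewrite !mulr_sumr -big_split.
rewrite -(e2 (fun i j => (T i j - P i j) ^+ 2)
             (fun i j => (P i j - H%:R^-1 * \sum_l P l j) ^+ 2)) /=.
rewrite exchange_big [X in _ <= X]exchange_big /=.
apply: ler_sum => j _.
apply: le_trans (var_le (fun i => T i j) (H%:R^-1 * \sum_l P l j)) _.
apply: ler_sum => i _ /=.
set a := T i j; set b := P i j; set c := _ * _.
have -> : 2 * (a - b) ^+ 2 + 2 * (b - c) ^+ 2 = (a - c) ^+ 2 + (a - 2 * b + c) ^+ 2 by ring.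
by rewrite lerDl sqr_ge0.
Qed.

Lemma devE (R : realType) H D (M : 'M[R]_(H, D)) i j :
  dev M i j = M i j - H%:R^-1 * \sum_l M l j.
Proof.
rewrite /dev !mxE; congr (_ - _ * _); apply: eq_bigr => l _; by rewrite !mxE mul1r.
Qed.
Unset Implicit Arguments.
Theorem lemma3 (R : realType) (J H D : nat) (uf Lf : R)
  (f : 'I_H -> 'rV[R]_D -> R) (C : 'I_H -> set 'rV[R]_D) (s : 'rV[R]_D)
  (theta : 'I_H -> 'rV[R]_D -> 'rV[R]_D) (delta2 : R)
  (gamma : nat -> R) (Lam Lamh : nat -> 'M[R]_(H, D)) :
  (0 < H)%N -> (H <= J)%N -> 0 < uf -> 0 < Lf ->
  (forall i, strongly_convex uf (f i)) ->
  (forall i, smooth_L Lf (f i)) ->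
  (forall i, C i !=set0) -> (forall i, compact (C i)) -> (forall i, cvx_set (C i)) ->
  (* theta i lam = argmin_{theta in C_i} lam^T theta + f_i theta *)
  (forall i lam, is_argmin (C i) (f i) lam (theta i lam)) ->
  (* grad g_i lam = (1/H) s - (1/H) theta i lam ;  delta2 = sup of the heterogeneity *)
  let gradg := fun i lam => (H%:R)^-1 *: s - (H%:R)^-1 *: theta i lam in
  let het := fun i lam => sqnorm (gradg i lam - (H%:R)^-1 *: \sum_(j < H) gradg j lam) in
  (forall i lam, het i lam <= delta2) ->
  (forall b, (forall i lam, het i lam <= b) -> delta2 <= b) ->
  (forall k, 0 < gamma k) ->
  (* lambda_i^{k+1/2} = lambda_i^k - gamma^k ((1/J) s - (1/J) theta_i^k) *)
  (forall k (i : 'I_H),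
     row i (Lamh k) = row i (Lam k)
       - gamma k *: ((J%:R)^-1 *: s - (J%:R)^-1 *: theta i (row i (Lam k)))) ->
  forall k,
    (forall v : R, 0 < v -> v < 1 ->
       frob2 (dev (Lamh k)) <=
         ((1 - v)^-1 + 6 * gamma k ^+ 2 / (v * uf ^+ 2 * J%:R ^+ 2)) * frob2 (dev (Lam k))
         + 3 * gamma k ^+ 2 * delta2 * H%:R ^+ 3 / (v * J%:R ^+ 2)) /\
    (gamma k <= uf * J%:R / (2 * Num.sqrt 3) ->
       frob2 (dev (Lamh k)) <=
         3 * frob2 (dev (Lam k)) + 6 * gamma k ^+ 2 * delta2 * H%:R ^+ 3 / J%:R ^+ 2).
Proof.
move=> H0 HJ u0 L0 sc sm ne cp cv am gradg het hhet hsup g0 hrow k.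
set A := Lam k; set B := Lamh k; set g := gamma k.
have J0 : (0 < J)%N by exact: leq_trans H0 HJ.
have Hn : H%:R != 0 :> R by rewrite pnatr_eq0 -lt0n.
have Jn : J%:R != 0 :> R by rewrite pnatr_eq0 -lt0n.
have Hp : 0 < H%:R :> R by rewrite ltr0n.
have Jp : 0 < J%:R :> R by rewrite ltr0n.
pose T i j := theta i (row i A) 0 j.
pose lb : 'rV[R]_D := \row_j (H%:R^-1 * \sum_l A l j).
pose P i j := theta i lb 0 j.
have hB : forall i j, B i j = A i j - g * ((J%:R)^-1 * s 0 j - (J%:R)^-1 * T i j).
  move=> i j; have := congr1 (fun M : 'rV[R]_D => M 0 j) (hrow k i); rewrite !mxE /=.
  by [].
have devB : forall i j, dev B i j = dev A i j + g / J%:R * (T i j - H%:R^-1 * \sum_l T l j).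
  move=> i j; rewrite !devE.
  have -> : \sum_l B l j = \sum_l A l j + \sum_(l < H) (- (g * J%:R^-1 * s 0 j))
                + g * J%:R^-1 * \sum_l T l j.
    rewrite mulr_sumr -!big_split; apply: eq_bigr => l _; rewrite hB /=; ring.
  rewrite sumr_const card_ord hB -mulr_natr; field.
  by rewrite Jn Hn.
set F := frob2 (dev A).
have F0 : 0 <= F by rewrite /F /frob2; apply: sumr_ge0 => i _; apply: sumr_ge0 => j _; apply: sqr_ge0.
set E := \sum_i \sum_j (T i j - H%:R^-1 * \sum_l T l j) ^+ 2.
have sq0 : forall D' (x : 'rV[R]_D'), 0 <= sqnorm x.
  by move=> D' x; rewrite /sqnorm /dotv sumr_ge0 // => j _; rewrite -expr2 sqr_ge0.
have d0 : 0 <= delta2 by apply: le_trans (hhet (Ordinal H0) 0); apply: sq0.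
have hTP : \sum_i \sum_j (T i j - P i j) ^+ 2 <= 16 / (9 * uf ^+ 2) * F.
  rewrite /F /frob2 mulr_sumr; apply: ler_sum => i _.
  have := argmin_lip (u0) (sc i) (cv i) (am i) (row i A) lb.
  rewrite !sqnormE.
  have -> : \sum_j (row i A 0 j - lb 0 j) ^+ 2 = \sum_j dev A i j ^+ 2.
    by apply: eq_bigr => j _; rewrite devE !mxE.
  by [].
have hPP : \sum_i \sum_j (P i j - H%:R^-1 * \sum_l P l j) ^+ 2 <= H%:R ^+ 3 * delta2.
  have -> : H%:R ^+ 3 * delta2 = \sum_(i < H) (H%:R ^+ 2 * delta2).
    by rewrite sumr_const card_ord -mulr_natr; ring.
  apply: ler_sum => i _.
  have eh : het i lb = H%:R ^- 2 * \sum_j (P i j - H%:R^-1 * \sum_l P l j) ^+ 2.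
    rewrite /het sqnormE mulr_sumr; apply: eq_bigr => j _.
    rewrite !mxE summxE.
    have -> : \sum_l gradg l lb 0 j = H%:R^-1 * s 0 j *+ H - H%:R^-1 * \sum_l P l j.
      transitivity (\sum_(l < H) (H%:R^-1 * s 0 j - H%:R^-1 * P l j)).
        by apply: eq_bigr => l _; rewrite /gradg !mxE.
      by rewrite sumrB sumr_const card_ord -mulr_sumr.
    by rewrite -mulr_natr /P; field.
  have := hhet i lb; rewrite eh => hh.
  have -> : \sum_j (P i j - H%:R^-1 * \sum_l P l j) ^+ 2 =
     H%:R ^+ 2 * (H%:R ^- 2 * \sum_j (P i j - H%:R^-1 * \sum_l P l j) ^+ 2).
    by field.
  by rewrite ler_wpM2l // exprn_ge0 // ltW.
have hE : E <= 32 / (9 * uf ^+ 2) * F + 2 * H%:R ^+ 3 * delta2.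
  apply: le_trans (col_var T P) _; lra.
have part1 : forall v : R, 0 < v -> v < 1 ->
    frob2 (dev B) <=
      ((1 - v)^-1 + 6 * g ^+ 2 / (v * uf ^+ 2 * J%:R ^+ 2)) * F
      + 3 * g ^+ 2 * delta2 * H%:R ^+ 3 / (v * J%:R ^+ 2).
  move=> v v0 v1.
  have hs := frob_split (dA := fun i j => dev A i j) (dB := fun i j => dev B i j)
     (e := fun i j => T i j - H%:R^-1 * \sum_l T l j) v0 v1 devB.
  rewrite /frob2; apply: le_trans hs _; rewrite -/E -/(frob2 (dev A)) -/F.
  set K := v^-1 * (g / J%:R) ^+ 2.
  have K0 : 0 <= K by rewrite /K mulr_ge0 ?sqr_ge0 // ?invr_ge0 ltW.
  have hKE : K * E <= K * (32 / (9 * uf ^+ 2) * F + 2 * H%:R ^+ 3 * delta2).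
    by rewrite ler_wpM2l.
  have a0 : 0 <= K * uf^-2 * F by apply: mulr_ge0 _ F0; apply: mulr_ge0 K0 _; rewrite invr_ge0 exprn_ge0 // ltW.
  have b0 : 0 <= K * H%:R ^+ 3 * delta2 by apply: mulr_ge0 _ d0; apply: mulr_ge0 K0 _; rewrite exprn_ge0 // ltW.
  have e1 : K * (32 / (9 * uf ^+ 2) * F + 2 * H%:R ^+ 3 * delta2) =
     32 / 9 * (K * uf^-2 * F) + 2 * (K * H%:R ^+ 3 * delta2).
    by rewrite /K; field; rewrite Jn !gt_eqF.
  have e2 : ((1 - v)^-1 + 6 * g ^+ 2 / (v * uf ^+ 2 * J%:R ^+ 2)) * F
      + 3 * g ^+ 2 * delta2 * H%:R ^+ 3 / (v * J%:R ^+ 2) =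
      (1 - v)^-1 * F + 6 * (K * uf^-2 * F) + 3 * (K * H%:R ^+ 3 * delta2).
    by rewrite /K; field; rewrite Jn !gt_eqF // subr_gt0.
  rewrite e2; lra.
split; first exact: part1.
move=> hg.
have := part1 (1/2) ltac:(lra) ltac:(lra).
have -> : (1 - 1/2 : R)^-1 = 2 by field.
have -> : 3 * g ^+ 2 * delta2 * H%:R ^+ 3 / (1 / 2 * J%:R ^+ 2) =
   6 * g ^+ 2 * delta2 * H%:R ^+ 3 / J%:R ^+ 2 by field.
move=> h; apply: le_trans h _; rewrite lerD2r ler_wpM2r //.
have gp := g0 k; rewrite -/g in gp.
have s3 : Num.sqrt 3 ^+ 2 = 3 :> R by rewrite sqr_sqrtr.
have s3p : 0 < Num.sqrt 3 :> R by rewrite sqrtr_gt0.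
have hg2 : g ^+ 2 <= (uf * J%:R / (2 * Num.sqrt 3)) ^+ 2.
  by rewrite ler_pXn2r // ?nnegrE ltW //; apply: lt_le_trans hg.
have e3 : (uf * J%:R / (2 * Num.sqrt 3)) ^+ 2 = uf ^+ 2 * J%:R ^+ 2 / 12.
  by rewrite expr_div_n !exprMn s3; field.
rewrite e3 in hg2.
have -> : 6 * g ^+ 2 / (1 / 2 * uf ^+ 2 * J%:R ^+ 2) = 12 * g ^+ 2 / (uf ^+ 2 * J%:R ^+ 2).
  by field; rewrite Jn gt_eqF.
have wp : 0 < uf ^+ 2 * J%:R ^+ 2 by rewrite mulr_gt0 // exprn_gt0.
have : 12 * g ^+ 2 / (uf ^+ 2 * J%:R ^+ 2) <= 1.
  by rewrite ler_pdivrMr // mul1r; lra.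
lra.
Qed.
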